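(* In the setting of the context, take $\beta>0$ and $c>0$. Then for $\mu\in\mathbb{R}$ one has $i\mu\in\overline{W_{\overline{\mathbb{R}}\times\{\beta\}}(T)\setminus i\mathbb{R}}$ if and only if $\mu=0$ or $\mu$ is a real solution of $$q_\beta(\mu):=\mu^4+2d\mu^3+(2c+d^2)\mu^2+d\left(\frac{\beta}{2}+2c\right)\mu+c(\beta+c)=0.$$ The same statement holds also if $c=0$, with the exception that $0$ is then not in the set $\overline{W_{\overline{\mathbb{R}}\times\{\beta\}}(T)\setminus i\mathbb{R}}$.
   Context: Let $c\ge0$, $d>0$, $\delta_\pm:=\pm\sqrt{c-d^2/4}-id/2$ (principal square root). For real $\alpha,\beta$ let $p_{(\alpha,\beta)}(\omega):=(\alpha-\omega^2)(c-id\omega-\omega^2)-\beta\omega^2$ with roots $r_1,\dots,r_4$ labelled continuously in $(\alpha,\beta)\in\mathbb{R}^2$ and extended by limits to $\alpha=\pm\infty$ (where the roots are $\delta_+,\delta_-$ and $\infty$ twice), with values in the Riemann sphere $\overline{\mathbb{C}}$. For fixed $\beta$, $W_{\overline{\mathbb{R}}\times\{\beta\}}(T):=\bigcup_{n=1}^4\{r_n(\alpha,\beta):\alpha\in\mathbb{R}\cup\{\pm\infty\}\}$; the overline denotes closure in $\overline{\mathbb{C}}$. *)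

(* Defs.v *)
From Stdlib Require Import Reals.
From Coquelicot Require Import Coquelicot.
Open Scope R_scope.

(* Points of the Riemann sphere: Some z is the finite point z, None is infinity. *)
Definition sphere := option C.

Definition psqrt (x : R) : C :=
  if Rle_dec 0 x then (sqrt x, 0) else (0, sqrt (- x)).

Definition delta_plus (c d : R) : C :=
  Cminus (psqrt (c - d ^ 2 / 4)) (Cmult Ci (RtoC (d / 2))).
Definition delta_minus (c d : R) : C :=
  Cminus (Copp (psqrt (c - d ^ 2 / 4))) (Cmult Ci (RtoC (d / 2))).

Definition pab (c d alpha beta : R) (w : C) : C :=
  Cminus
    (Cmult (Cminus (RtoC alpha) (Cmult w w))
           (Cminus (Cminus (RtoC c) (Cmult (Cmult Ci (RtoC d)) w)) (Cmult w w)))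
    (Cmult (RtoC beta) (Cmult w w)).

(* W_{\bar R x {beta}}(T): union over alpha in R u {+-oo} of the roots of
   p_(alpha,beta); for alpha = +-oo the roots are delta_+, delta_- and oo. *)
Definition W_beta (c d beta : R) (z : sphere) : Prop :=
  match z with
  | Some w => (exists alpha : R, pab c d alpha beta w = RtoC 0)
              \/ w = delta_plus c d \/ w = delta_minus c d
  | None => True
  end.

Definition in_iR (z : sphere) : Prop :=
  match z with Some w => fst w = 0 | None => False end.

Definition chordal (z w : sphere) : R :=
  match z, w with
  | Some a, Some b =>
      2 * Cmod (Cminus a b) / sqrt ((1 + Cmod a ^ 2) * (1 + Cmod b ^ 2))
  | Some a, None | None, Some a => 2 / sqrt (1 + Cmod a ^ 2)
  | None, None => 0
  end.

Definition in_sphere_closure (S : sphere -> Prop) (z : sphere) : Prop :=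
  forall eps : R, 0 < eps -> exists w, S w /\ chordal z w < eps.

Definition W_minus_iR (c d beta : R) (z : sphere) : Prop :=
  W_beta c d beta z /\ ~ in_iR z.

Definition q_beta (c d beta mu : R) : R :=
  mu ^ 4 + 2 * d * mu ^ 3 + (2 * c + d ^ 2) * mu ^ 2
  + d * (beta / 2 + 2 * c) * mu + c * (beta + c).

(* Main.v *)
Require Import Defs.
From Stdlib Require Import Reals Lra Lia Psatz.
From Coquelicot Require Import Coquelicot.
Open Scope R_scope.

Definition A0 (c d y : R) := y^2 + d*y + c.
Definition Hf (c d b s y : R) :=
  2*y*((A0 c d y - s)^2 + s*(d+2*y)^2)
  + b*(2*y*(A0 c d y - s) + (s - y^2)*(d+2*y)).

Lemma pab_E1 c d al b x y :
  fst (pab c d al b (x,y)) * (c + d*y - x^2 + y^2)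
  + snd (pab c d al b (x,y)) * (-x*(d+2*y))
  = al * ((c + d*y - x^2 + y^2)^2 + (-x*(d+2*y))^2)
    - (x^2-y^2) * ((c + d*y - x^2 + y^2)^2 + (-x*(d+2*y))^2)
    - b*((x^2-y^2)*(c + d*y - x^2 + y^2) + (2*x*y)*(-x*(d+2*y))).
Proof. unfold pab, Cminus, Cmult, Cplus, Copp, RtoC, Ci; simpl; ring. Qed.

Lemma pab_E2 c d al b x y :
  snd (pab c d al b (x,y)) * (c + d*y - x^2 + y^2)
  - fst (pab c d al b (x,y)) * (-x*(d+2*y))
  = - x * Hf c d b (x^2) y.
Proof. unfold pab, Hf, A0, Cminus, Cmult, Cplus, Copp, RtoC, Ci; simpl; ring. Qed.

Lemma nec_W c d b x y :
  W_minus_iR c d b (Some (x,y)) -> x <> 0 /\ Hf c d b (x^2) y = 0.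
Proof.
  intros [HW HnR]. simpl in HnR. split; [exact HnR|].
  destruct HW as [[al Hal] | [Hdp | Hdm]].
  - pose proof (pab_E2 c d al b x y) as E.
    rewrite Hal in E. cbn [fst snd RtoC] in E.
    assert (x * Hf c d b (x^2) y = 0) by lra.
    apply Rmult_integral in H. destruct H; [contradiction|assumption].
  - unfold delta_plus, psqrt in Hdp. destruct (Rle_dec 0 (c - d^2/4)) as [Hk|Hk].
    + assert (H1 := f_equal fst Hdp). assert (H2 := f_equal snd Hdp).
      unfold Cminus, Cmult, Cplus, Copp, RtoC, Ci in H1, H2; cbn [fst snd] in H1, H2.
      assert (Hx : x^2 = c - d^2/4).
      { rewrite H1. replace (sqrt (c - d ^ 2 / 4) + - (0 * (d / 2) - 1 * 0)) with (sqrt (c - d ^ 2 / 4)) by ring.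
        apply pow2_sqrt. exact Hk. }
      rewrite Hx. unfold Hf, A0. rewrite H2. field.
    + assert (H1 := f_equal fst Hdp).
      unfold Cminus, Cmult, Cplus, Copp, RtoC, Ci in H1; cbn [fst snd] in H1. lra.
  - unfold delta_minus, psqrt in Hdm. destruct (Rle_dec 0 (c - d^2/4)) as [Hk|Hk].
    + assert (H1 := f_equal fst Hdm). assert (H2 := f_equal snd Hdm).
      unfold Cminus, Cmult, Cplus, Copp, RtoC, Ci in H1, H2; cbn [fst snd] in H1, H2.
      assert (Hx : x^2 = c - d^2/4).
      { rewrite H1. replace (- sqrt (c - d ^ 2 / 4) + - (0 * (d / 2) - 1 * 0)) with (- sqrt (c - d ^ 2 / 4)) by ring.
        replace ((- sqrt (c - d ^ 2 / 4))^2) with ((sqrt (c - d ^ 2 / 4))^2) by ring.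
        apply pow2_sqrt. exact Hk. }
      rewrite Hx. unfold Hf, A0. rewrite H2. field.
    + assert (H1 := f_equal fst Hdm).
      unfold Cminus, Cmult, Cplus, Copp, RtoC, Ci in H1; cbn [fst snd] in H1. lra.
Qed.

Lemma suff_W c d b x y :
  x <> 0 -> Hf c d b (x^2) y = 0 -> W_minus_iR c d b (Some (x,y)).
Proof.
  intros Hx HH. split; [|simpl; exact Hx].
  set (A := c + d*y - x^2 + y^2). set (B := -x*(d+2*y)).
  destruct (Req_dec (A^2 + B^2) 0) as [HG|HG].
  - assert (HA : A = 0) by nra. assert (HB : B = 0) by nra.
    assert (Hy : y = -(d/2)).
    { unfold B in HB. assert (d + 2*y = 0).
      { apply Rmult_integral in HB. destruct HB as [h|h]; [lra|exact h]. } lra. }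
    assert (Hk : x^2 = c - d^2/4). { unfold A in HA. rewrite Hy in HA. lra. }
    simpl. right.
    assert (Hk0 : 0 <= c - d^2/4) by nra.
    destruct (Rle_lt_dec 0 x) as [Hxp|Hxn].
    + left. unfold delta_plus, psqrt. destruct (Rle_dec 0 (c - d^2/4)) as [_|n]; [|lra].
      rewrite <- Hk. rewrite <- (Rsqr_pow2 x), sqrt_Rsqr by lra.
      apply injective_projections; unfold Cminus, Cmult, Cplus, Copp, RtoC, Ci; simpl; lra.
    + right. unfold delta_minus, psqrt. destruct (Rle_dec 0 (c - d^2/4)) as [_|n]; [|lra].
      rewrite <- Hk. rewrite <- (Rsqr_pow2 x), sqrt_Rsqr_abs, Rabs_left by lra.
      apply injective_projections; unfold Cminus, Cmult, Cplus, Copp, RtoC, Ci; simpl; lra.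
  - simpl. left.
    exists ((x^2-y^2) + b*((x^2-y^2)*A + (2*x*y)*B)/(A^2+B^2)).
    set (al := (x^2-y^2) + b*((x^2-y^2)*A + (2*x*y)*B)/(A^2+B^2)).
    pose proof (pab_E1 c d al b x y) as E1. pose proof (pab_E2 c d al b x y) as E2.
    fold A B in E1, E2. rewrite HH in E2.
    assert (R0 : al * (A ^ 2 + B ^ 2) - (x ^ 2 - y ^ 2) * (A ^ 2 + B ^ 2) -
      b * ((x ^ 2 - y ^ 2) * A + 2 * x * y * B) = 0).
    { unfold al. field. exact HG. }
    rewrite R0 in E1.
    set (p1 := fst (pab c d al b (x, y))) in *. set (p2 := snd (pab c d al b (x, y))) in *.
    assert (Hp1 : p1 * (A^2+B^2) = 0).
    { replace (p1 * (A^2+B^2)) with ((p1*A + p2*B)*A - (p2*A - p1*B)*B) by ring. rewrite E1, E2. ring. }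
    assert (Hp2 : p2 * (A^2+B^2) = 0).
    { replace (p2 * (A^2+B^2)) with ((p1*A + p2*B)*B + (p2*A - p1*B)*A) by ring. rewrite E1, E2. ring. }
    apply Rmult_integral in Hp1. apply Rmult_integral in Hp2.
    destruct Hp1 as [Hp1|]; [|contradiction]. destruct Hp2 as [Hp2|]; [|contradiction].
    apply injective_projections; simpl; [exact Hp1 | exact Hp2].
Qed.
Lemma cont_near (f : R -> R) y0 eps : continuity f -> 0 < eps ->
  exists del, 0 < del /\ forall y, Rabs (y - y0) < del -> Rabs (f y - f y0) < eps.
Proof.
  intros Hc He. destruct (Hc y0 eps He) as [al [Hal H]].
  exists al. split; [exact Hal|]. intros y Hy.
  destruct (Req_dec y y0) as [->|Hne].
  - rewrite Rminus_diag, Rabs_R0. exact He.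
  - apply (H y). split; [split; [exact I| auto] | exact Hy].
Qed.

Lemma cont_pos (f : R -> R) y0 : continuity f -> 0 < f y0 ->
  exists del, 0 < del /\ forall y, Rabs (y - y0) < del -> 0 < f y.
Proof.
  intros Hc Hp. destruct (cont_near f y0 (f y0) Hc Hp) as [del [Hd H]].
  exists del. split; [exact Hd|]. intros y Hy. specialize (H y Hy).
  apply Rabs_def2 in H. lra.
Qed.

Lemma L2 (f0 f1 f2 : R -> R) y0 : continuity f0 -> continuity f1 -> continuity f2 ->
  0 < f0 y0 -> exists del, 0 < del /\ forall s y, Rabs s < del -> Rabs (y - y0) < del ->
  0 < f0 y + s * f1 y + s^2 * f2 y.
Proof.
  intros C0 C1 C2 Hp.
  destruct (cont_near f0 y0 (f0 y0 / 2) C0 ltac:(lra)) as [d0 [Hd0 H0]].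
  destruct (cont_near f1 y0 1 C1 ltac:(lra)) as [d1 [Hd1 H1]].
  destruct (cont_near f2 y0 1 C2 ltac:(lra)) as [d2 [Hd2 H2]].
  set (M := Rabs (f1 y0) + Rabs (f2 y0) + 2).
  assert (HM : 0 < M) by (unfold M; pose proof (Rabs_pos (f1 y0)); pose proof (Rabs_pos (f2 y0)); lra).
  set (e := Rmin (Rmin d0 d1) (Rmin d2 (Rmin 1 (f0 y0 / (2*M))))).
  assert (He : 0 < e).
  { unfold e. repeat apply Rmin_pos; try lra. apply Rdiv_lt_0_compat; lra. }
  exists e. split; [exact He|]. intros s y Hs Hy.
  assert (e <= d0 /\ e <= d1 /\ e <= d2 /\ e <= 1 /\ e <= f0 y0 / (2*M)) as [E0 [E1 [E2 [E3 E4]]]].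
  { unfold e.
    pose proof (Rmin_l (Rmin d0 d1) (Rmin d2 (Rmin 1 (f0 y0 / (2*M))))).
    pose proof (Rmin_r (Rmin d0 d1) (Rmin d2 (Rmin 1 (f0 y0 / (2*M))))).
    pose proof (Rmin_l d0 d1). pose proof (Rmin_r d0 d1).
    pose proof (Rmin_l d2 (Rmin 1 (f0 y0 / (2*M)))). pose proof (Rmin_r d2 (Rmin 1 (f0 y0 / (2*M)))).
    pose proof (Rmin_l 1 (f0 y0 / (2*M))). pose proof (Rmin_r 1 (f0 y0 / (2*M))).
    lra. }
  specialize (H0 y ltac:(lra)). specialize (H1 y ltac:(lra)). specialize (H2 y ltac:(lra)).
  apply Rabs_def2 in H0.
  assert (B1 : Rabs (f1 y) <= Rabs (f1 y0) + 1).
  { pose proof (Rabs_triang_inv (f1 y) (f1 y0)). lra. }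
  assert (B2 : Rabs (f2 y) <= Rabs (f2 y0) + 1).
  { pose proof (Rabs_triang_inv (f2 y) (f2 y0)). lra. }
  assert (Hs1 : Rabs s <= 1) by lra.
  assert (K : Rabs (s * f1 y + s^2 * f2 y) <= Rabs s * M).
  { eapply Rle_trans. apply Rabs_triang.
    rewrite !Rabs_mult, <- RPow_abs.
    assert (Rabs s ^2 <= Rabs s) by (pose proof (Rabs_pos s); nra).
    unfold M. pose proof (Rabs_pos s). pose proof (Rabs_pos (f2 y)). pose proof (Rabs_pos (f1 y)). nra. }
  assert (Rabs s * M < f0 y0 / 2).
  { assert (Rabs s < f0 y0 / (2*M)) by lra.
    apply Rmult_lt_compat_r with (r := M) in H; [|lra].
    replace (f0 y0 / (2*M) * M) with (f0 y0/2) in H by (field; lra). lra. }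
  pose proof (Rle_abs (-(s * f1 y + s^2 * f2 y))). rewrite Rabs_Ropp in H3. lra.
Qed.

Lemma chord_eq mu x y :
  chordal (Some (0,mu)) (Some (x,y)) =
  2 * sqrt (x^2 + (y-mu)^2) / sqrt ((1 + mu^2) * (1 + (x^2 + y^2))).
Proof.
  unfold chordal, Cmod, Cminus, Cplus, Copp. cbn [fst snd].
  rewrite !pow2_sqrt by nra.
  replace ((0 + - x)^2 + (mu + - y)^2) with (x^2 + (y-mu)^2) by ring.
  replace (0^2 + mu^2) with (mu^2) by ring. reflexivity.
Qed.

Lemma chord_none mu : chordal (Some (0,mu)) None = 2 / sqrt (1 + mu^2).
Proof.
  unfold chordal, Cmod. cbn [fst snd]. rewrite pow2_sqrt by nra.
  replace (0^2 + mu^2) with (mu^2) by ring. reflexivity.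
Qed.

Lemma suff_gen c d b mu :
  (forall r, 0 < r -> exists x y, x <> 0 /\ Rabs x < r /\ Rabs (y - mu) < r /\ Hf c d b (x^2) y = 0) ->
  in_sphere_closure (W_minus_iR c d b) (Some (0,mu)).
Proof.
  intros H eps He. destruct (H (eps/4) ltac:(lra)) as [x [y [Hx [Hxr [Hyr HH]]]]].
  exists (Some (x,y)). split; [apply suff_W; assumption|].
  rewrite chord_eq.
  set (S := sqrt ((1 + mu^2) * (1 + (x^2 + y^2)))).
  assert (HS : 1 <= S).
  { unfold S. apply Rle_trans with (sqrt 1); [rewrite sqrt_1; lra|]. apply sqrt_le_1_alt. pose proof (pow2_ge_0 mu); pose proof (pow2_ge_0 x); pose proof (pow2_ge_0 y). nra. }
  assert (HD : sqrt (x^2 + (y-mu)^2) <= Rabs x + Rabs (y - mu)).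
  { rewrite <- (sqrt_pow2 (Rabs x + Rabs (y-mu))) by (pose proof (Rabs_pos x); pose proof (Rabs_pos (y-mu)); lra).
    apply sqrt_le_1_alt. rewrite <- (pow2_abs x) at 1. rewrite <- (pow2_abs (y-mu)) at 1.
    pose proof (Rabs_pos x); pose proof (Rabs_pos (y-mu)); nra. }
  pose proof (sqrt_pos (x^2 + (y-mu)^2)).
  apply Rle_lt_trans with (2 * sqrt (x^2 + (y-mu)^2)).
  - unfold Rdiv. rewrite <- (Rmult_1_r (2 * sqrt _)) at 2.
    apply Rmult_le_compat_l; [lra|]. rewrite <- Rinv_1. apply Rinv_le_contravar; lra.
  - lra.
Qed.

Lemma sq_lt_abs x a : 0 < a -> x^2 < a^2 -> Rabs x < a.
Proof.
  intros Ha H. rewrite <- (pow2_abs x) in H. pose proof (Rabs_pos x).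
  destruct (Rlt_le_dec (Rabs x) a) as [h|h]; [exact h|]. nra.
Qed.

Lemma nec_gen c d b mu :
  (exists del, 0 < del /\ forall x y, x <> 0 -> Rabs x < del -> Rabs (y - mu) < del -> Hf c d b (x^2) y <> 0) ->
  ~ in_sphere_closure (W_minus_iR c d b) (Some (0,mu)).
Proof.
  intros [del [Hdel H]] Hcl.
  set (K := 1 + mu^2). assert (HK : 1 <= K) by (unfold K; nra).
  set (m := Rmin del 1). assert (Hm : 0 < m) by (unfold m; apply Rmin_pos; lra).
  assert (Hm1 : m <= del /\ m <= 1) by (unfold m; split; [apply Rmin_l|apply Rmin_r]).
  set (eps := m / (2*K)). assert (He : 0 < eps) by (unfold eps; apply Rdiv_lt_0_compat; lra).
  assert (HeK : eps * K = m / 2) by (unfold eps; field; lra).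
  destruct (Hcl eps He) as [w [Hw Hch]].
  destruct w as [[x y]|].
  - destruct (nec_W c d b x y Hw) as [Hx HH].
    rewrite chord_eq in Hch. fold K in Hch.
    set (D := x^2 + (y-mu)^2) in *.
    set (S := sqrt (K * (1 + (x^2 + y^2)))) in *.
    assert (HS : 0 < S) by (unfold S; apply sqrt_lt_R0; nra).
    assert (H1 : 2 * sqrt D < eps * S).
    { apply (Rmult_lt_compat_r S) in Hch; [|lra]. unfold Rdiv in Hch.
      rewrite Rmult_assoc, Rinv_l in Hch by lra. lra. }
    assert (HD0 : 0 <= D) by (unfold D; pose proof (pow2_ge_0 x); pose proof (pow2_ge_0 (y-mu)); lra).
    assert (H2 : 4 * D < eps^2 * (K * (1 + (x^2+y^2)))).
    { pose proof (sqrt_pos D). pose proof (pow2_sqrt D HD0). pose proof (pow2_sqrt (K * (1 + (x^2+y^2))) ltac:(nra)).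
      fold S in H3. nra. }
    assert (Hn : x^2 + y^2 <= 2*D + 2*K - 2) by (unfold D, K; pose proof (pow2_ge_0 (y-2*mu)); nra).
    assert (HDs : D < (eps*K)^2).
    { destruct (Rlt_le_dec D ((eps*K)^2)) as [h|h]; [exact h|exfalso].
      assert (Hek : eps^2 * K <= 1/4).
      { assert (eps^2 * K <= (eps*K)^2) by nra. rewrite HeK in H0. nra. }
      assert (eps^2 * (K * (1 + (x^2+y^2))) <= eps^2 * K * (2*K + 2*D)) by nra.
      assert (eps^2 * K * (2*K + 2*D) = 2*(eps*K)^2 + 2*(eps^2*K)*D) by ring.
      assert (0 < D) by (rewrite HeK in h; nra).
      nra. }
    rewrite HeK in HDs.
    assert (Ax : Rabs x < del).
    { apply Rlt_le_trans with (m/2); [|lra]. apply sq_lt_abs; [lra|].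
      unfold D in HDs. pose proof (pow2_ge_0 (y-mu)). lra. }
    assert (Ay : Rabs (y - mu) < del).
    { apply Rlt_le_trans with (m/2); [|lra]. apply sq_lt_abs; [lra|].
      unfold D in HDs. pose proof (pow2_ge_0 x). lra. }
    exact (H x y Hx Ax Ay HH).
  - rewrite chord_none in Hch. fold K in Hch.
    assert (sqrt K <= K).
    { rewrite <- (sqrt_pow2 K) at 2 by lra. apply sqrt_le_1_alt. nra. }
    assert (0 < sqrt K) by (apply sqrt_lt_R0; lra).
    assert (2 / K <= 2 / sqrt K).
    { unfold Rdiv. apply Rmult_le_compat_l; [lra|]. apply Rinv_le_contravar; lra. }
    assert (eps <= 1 / (2*K)).
    { unfold eps, Rdiv. apply Rmult_le_compat_r; [|lra]. left. apply Rinv_0_lt_compat; lra. }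
    assert (1/(2*K) < 2/K) by (apply Rmult_lt_reg_r with K; [lra|]; field_simplify; lra).
    lra.
Qed.

Definition H1f (c d b y : R) := 2*y*((d+2*y)^2 - 2*A0 c d y) + b*d.
Definition q1 (c d b mu y : R) := (y^3 + y^2*mu + y*mu^2 + mu^3) + 2*d*(y^2+y*mu+mu^2)
  + (2*c+d^2)*(y+mu) + d*(b/2+2*c).
Definition q2 (c d mu y : R) := y^2 + 2*mu*y + 3*mu^2 + 2*d*y + 4*d*mu + (2*c+d^2).
Definition q3 (d mu y : R) := y + 3*mu + 2*d.

Lemma Hf_split c d b s y : Hf c d b s y = 2*y*q_beta c d b y + s * H1f c d b y + s^2*(2*y).
Proof. unfold Hf, H1f, q_beta, A0. field. Qed.
Lemma q_q1 c d b mu y : q_beta c d b y = q_beta c d b mu + (y-mu)*q1 c d b mu y.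
Proof. unfold q_beta, q1. field. Qed.
Lemma q1_q2 c d b mu y : q1 c d b mu y = q1 c d b mu mu + (y-mu)*q2 c d mu y.
Proof. unfold q1, q2. field. Qed.
Lemma q2_q3 c d mu y : q2 c d mu y = q2 c d mu mu + (y-mu)*q3 d mu y.
Proof. unfold q2, q3. ring. Qed.

Lemma key_id c d b mu :
  (A0 c d mu)^4 * (6 * H1f c d b mu + 4 * q1 c d b mu mu + 4*mu*q2 c d mu mu)
  = 12*mu*q_beta c d b mu * ((d+2*mu)^2 - 2*A0 c d mu) * (A0 c d mu)^2
    + 2*(2*q_beta c d b mu + 2*mu*q1 c d b mu mu) * (2*A0 c d mu*(d+2*mu)) * (A0 c d mu)^2
    + 2*mu*q_beta c d b mu * ((2*(d+2*mu)^2 + 4*A0 c d mu) * (A0 c d mu)^2 - 2*(2*A0 c d mu*(d+2*mu))^2).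
Proof. unfold H1f, q1, q2, q_beta, A0. field. Qed.

Lemma SC_gen c d b mu r : 0 < r ->
  (exists y1 y2 del, 0 < del /\ Rabs (y1 - mu) < r /\ Rabs (y2 - mu) < r /\
     forall x, 0 < x < del -> Hf c d b (x^2) y1 * Hf c d b (x^2) y2 < 0) ->
  exists x y, x <> 0 /\ Rabs x < r /\ Rabs (y - mu) < r /\ Hf c d b (x^2) y = 0.
Proof.
  intros Hr [y1 [y2 [del [Hdel [H1 [H2 H]]]]]].
  set (x := Rmin del r / 2).
  assert (Hx : 0 < x) by (unfold x; pose proof (Rmin_pos del r Hdel Hr); lra).
  assert (Hx2 : x < del /\ x < r).
  { unfold x. pose proof (Rmin_l del r). pose proof (Rmin_r del r). pose proof (Rmin_pos del r Hdel Hr). lra. }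
  specialize (H x ltac:(lra)).
  assert (Hc : continuity (fun y => Hf c d b (x^2) y)) by (unfold Hf, A0; reg).
  assert (Hv : Rmin (Hf c d b (x^2) y1) (Hf c d b (x^2) y2) <= 0 <= Rmax (Hf c d b (x^2) y1) (Hf c d b (x^2) y2)).
  { unfold Rmin, Rmax. destruct (Rle_dec _ _); split; nra. }
  destruct (IVT_gen _ y1 y2 0 Hc Hv) as [z [Hz Hfz]].
  exists x, z. split; [lra|]. split; [rewrite Rabs_right; lra|]. split; [|exact Hfz].
  apply Rabs_def2 in H1. apply Rabs_def2 in H2. apply Rabs_def1;
  unfold Rmin, Rmax in Hz; destruct (Rle_dec y1 y2); lra.
Qed.

Lemma persist c d b y sg : (sg = 1 \/ sg = -1) -> 0 < sg * (2*y*q_beta c d b y) ->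
  exists del, 0 < del /\ forall x, 0 < x < del -> 0 < sg * Hf c d b (x^2) y.
Proof.
  intros Hsg Hp.
  destruct (L2 (fun y => sg*(2*y*q_beta c d b y)) (fun y => sg * H1f c d b y) (fun y => sg*(2*y)) y)
    as [del [Hdel H]]; try (unfold q_beta, H1f, A0; reg); try exact Hp.
  exists (Rmin del 1). split; [apply Rmin_pos; lra|]. intros x Hx.
  pose proof (Rmin_l del 1). pose proof (Rmin_r del 1).
  specialize (H (x^2) y). rewrite Hf_split.
  assert (0 < sg * (2 * y * q_beta c d b y) + x ^ 2 * (sg * H1f c d b y) + (x ^ 2) ^ 2 * (sg * (2 * y))).
  { apply H. rewrite Rabs_right by nra. nra. rewrite Rminus_diag, Rabs_R0; lra. }
  replace (sg * (2 * y * q_beta c d b y + x ^ 2 * H1f c d b y + (x ^ 2) ^ 2 * (2 * y)))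
    with (sg * (2 * y * q_beta c d b y) + x ^ 2 * (sg * H1f c d b y) + (x ^ 2) ^ 2 * (sg * (2 * y))) by ring.
  exact H2.
Qed.

Lemma persist0 c d b mu sg : (sg = 1 \/ sg = -1) -> 2*mu*q_beta c d b mu = 0 ->
  0 < sg * H1f c d b mu ->
  exists del, 0 < del /\ forall x, 0 < x < del -> 0 < sg * Hf c d b (x^2) mu.
Proof.
  intros Hsg H0 Hp.
  destruct (L2 (fun _ => sg * H1f c d b mu) (fun _ => sg*(2*mu)) (fun _ => 0) mu)
    as [del [Hdel H]]; try (reg); try exact Hp.
  exists (Rmin del 1). split; [apply Rmin_pos; lra|]. intros x Hx.
  pose proof (Rmin_l del 1). pose proof (Rmin_r del 1).
  specialize (H (x^2) mu). rewrite Hf_split, H0.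
  assert (0 < sg * H1f c d b mu + x ^ 2 * (sg * (2 * mu)) + (x ^ 2) ^ 2 * 0).
  { apply H. rewrite Rabs_right by nra. nra. rewrite Rminus_diag, Rabs_R0; lra. }
  replace (sg * (0 + x ^ 2 * H1f c d b mu + (x ^ 2) ^ 2 * (2 * mu)))
    with (x^2 * (sg * H1f c d b mu + x ^ 2 * (sg * (2 * mu)) + (x ^ 2) ^ 2 * 0)) by ring.
  apply Rmult_lt_0_compat; [nra|exact H3].
Qed.

Lemma sign_choice (v : R) : v <> 0 -> exists sg, (sg = 1 \/ sg = -1) /\ 0 < sg * v.
Proof.
  intros Hv. destruct (Rlt_le_dec 0 v).
  - exists 1. split; [left; reflexivity| lra].
  - exists (-1). split; [right; reflexivity| lra].
Qed.

Lemma odd_case c d b mu (Phi : R -> R) n : continuity Phi -> Phi mu <> 0 ->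
  (forall y, 2*y*q_beta c d b y = (y-mu)^n * Phi y) -> (-1)^n = -1 ->
  forall r, 0 < r -> exists x y, x <> 0 /\ Rabs x < r /\ Rabs (y - mu) < r /\ Hf c d b (x^2) y = 0.
Proof.
  intros Hc HP Hf0 Hn r Hr.
  destruct (sign_choice _ HP) as [sg [Hsg Hp]].
  destruct (cont_pos (fun y => sg * Phi y) mu) as [del [Hdel Hd]]; [reg; exact Hc|exact Hp|].
  set (t := Rmin del r / 2).
  assert (Ht : 0 < t /\ t < del /\ t < r).
  { unfold t. pose proof (Rmin_l del r). pose proof (Rmin_r del r). pose proof (Rmin_pos del r Hdel Hr). lra. }
  assert (Htn : 0 < t^n) by (apply pow_lt; lra).
  assert (Hm : (-t)^n = - t^n).
  { replace (-t) with ((-1)*t) by ring. rewrite Rpow_mult_distr, Hn. ring. }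
  assert (Pp : 0 < sg * (2*(mu+t)*q_beta c d b (mu+t))).
  { rewrite Hf0. replace (mu + t - mu) with t by ring.
    assert (0 < sg * Phi (mu+t)) by (apply Hd; replace (mu+t-mu) with t by ring; rewrite Rabs_right; lra).
    replace (sg * (t ^ n * Phi (mu + t))) with (t^n * (sg * Phi (mu+t))) by ring. nra. }
  assert (Pm : 0 < (-sg) * (2*(mu-t)*q_beta c d b (mu-t))).
  { rewrite Hf0. replace (mu - t - mu) with (-t) by ring. rewrite Hm.
    assert (0 < sg * Phi (mu-t)) by (apply Hd; replace (mu-t-mu) with (-t) by ring; rewrite Rabs_Ropp, Rabs_right; lra).
    replace (- sg * (- t ^ n * Phi (mu - t))) with (t^n * (sg * Phi (mu-t))) by ring. nra. }
  destruct (persist c d b (mu+t) sg Hsg Pp) as [d1 [Hd1 P1]].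
  destruct (persist c d b (mu-t) (-sg) ltac:(destruct Hsg; [right|left]; lra) Pm) as [d2 [Hd2 P2]].
  apply SC_gen; [exact Hr|].
  exists (mu+t), (mu-t), (Rmin d1 d2). split; [apply Rmin_pos; lra|].
  split; [replace (mu+t-mu) with t by ring; rewrite Rabs_right; lra|].
  split; [replace (mu-t-mu) with (-t) by ring; rewrite Rabs_Ropp, Rabs_right; lra|].
  intros x Hx. pose proof (Rmin_l d1 d2). pose proof (Rmin_r d1 d2).
  specialize (P1 x ltac:(lra)). specialize (P2 x ltac:(lra)).
  destruct Hsg; subst sg; nra.
Qed.

Lemma double_case c d b mu (Phi : R -> R) : continuity Phi -> Phi mu <> 0 ->
  (forall y, 2*y*q_beta c d b y = (y-mu)^2 * Phi y) -> H1f c d b mu * Phi mu < 0 ->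
  forall r, 0 < r -> exists x y, x <> 0 /\ Rabs x < r /\ Rabs (y - mu) < r /\ Hf c d b (x^2) y = 0.
Proof.
  intros Hc HP Hf0 HH1 r Hr.
  destruct (sign_choice _ HP) as [sg [Hsg Hp]].
  destruct (cont_pos (fun y => sg * Phi y) mu) as [del [Hdel Hd]]; [reg; exact Hc|exact Hp|].
  set (t := Rmin del r / 2).
  assert (Ht : 0 < t /\ t < del /\ t < r).
  { unfold t. pose proof (Rmin_l del r). pose proof (Rmin_r del r). pose proof (Rmin_pos del r Hdel Hr). lra. }
  assert (Pp : 0 < sg * (2*(mu+t)*q_beta c d b (mu+t))).
  { rewrite Hf0. replace (mu + t - mu) with t by ring.
    assert (0 < sg * Phi (mu+t)) by (apply Hd; replace (mu+t-mu) with t by ring; rewrite Rabs_right; lra).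
    replace (sg * (t ^ 2 * Phi (mu + t))) with (t^2 * (sg * Phi (mu+t))) by ring. apply Rmult_lt_0_compat; [apply pow_lt; lra | lra]. }
  assert (H0 : 2*mu*q_beta c d b mu = 0) by (rewrite Hf0; ring).
  assert (Pm : 0 < (-sg) * H1f c d b mu) by (destruct Hsg; subst sg; nra).
  destruct (persist c d b (mu+t) sg Hsg Pp) as [d1 [Hd1 P1]].
  destruct (persist0 c d b mu (-sg) ltac:(destruct Hsg; [right|left]; lra) H0 Pm) as [d2 [Hd2 P2]].
  apply SC_gen; [exact Hr|].
  exists (mu+t), mu, (Rmin d1 d2). split; [apply Rmin_pos; lra|].
  split; [replace (mu+t-mu) with t by ring; rewrite Rabs_right; lra|].
  split; [rewrite Rminus_diag, Rabs_R0; lra|].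
  intros x Hx. pose proof (Rmin_l d1 d2). pose proof (Rmin_r d1 d2).
  specialize (P1 x ltac:(lra)). specialize (P2 x ltac:(lra)).
  destruct Hsg; subst sg; nra.
Qed.

Lemma suff_core c d b mu : 0 < d -> 0 < b -> 0 <= c ->
  ((mu = 0 /\ 0 < c) \/ (mu <> 0 /\ q_beta c d b mu = 0)) ->
  forall r, 0 < r -> exists x y, x <> 0 /\ Rabs x < r /\ Rabs (y - mu) < r /\ Hf c d b (x^2) y = 0.
Proof.
  intros Hd Hb Hc [[-> Hc0] | [Hmu Hq]].
  - apply (odd_case c d b 0 (fun y => 2*q_beta c d b y) 1).
    + unfold q_beta; reg.
    + unfold q_beta. nra.
    + intros y. ring.
    + ring.
  - assert (Iq : q_beta c d b mu = (A0 c d mu)^2 + b*(d*mu/2 + c)) by (unfold q_beta, A0; field).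
    assert (Iq1 : q1 c d b mu mu = 2*A0 c d mu*(2*mu+d) + b*d/2) by (unfold q1, A0; field).
    destruct (Req_dec (q1 c d b mu mu) 0) as [Hq1|Hq1].
    + assert (HA : A0 c d mu <> 0).
      { intro HA. rewrite HA in Iq1. nra. }
      destruct (Req_dec (q2 c d mu mu) 0) as [Hq2|Hq2].
      * apply (odd_case c d b mu (fun y => 2*y*q3 d mu y) 3).
        -- unfold q3; reg.
        -- unfold q3. intro H. apply Rmult_integral in H. destruct H as [H|H].
           ++ apply Rmult_integral in H. destruct H; lra.
           ++ assert (2*mu + d = 0) by lra. rewrite H0 in Iq1. nra.
        -- intros y. rewrite (q_q1 c d b mu y), (q1_q2 c d b mu y), (q2_q3 c d mu y), Hq, Hq1, Hq2. ring.
        -- ring.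
      * apply (double_case c d b mu (fun y => 2*y*q2 c d mu y)).
        -- unfold q2; reg.
        -- intro H. apply Rmult_integral in H. destruct H as [H|H]; [|contradiction].
           apply Rmult_integral in H. destruct H; lra.
        -- intros y. rewrite (q_q1 c d b mu y), (q1_q2 c d b mu y), Hq, Hq1. ring.
        -- pose proof (key_id c d b mu) as K. rewrite Hq, Hq1 in K.
           assert (K' : (A0 c d mu)^4 * (6 * H1f c d b mu + 4 * 0 + 4 * mu * q2 c d mu mu) = 0)
             by (rewrite K; ring).
           apply Rmult_integral in K'. destruct K' as [K'|K']; [apply (pow_nonzero _ 4) in HA; contradiction|].
           assert (E : H1f c d b mu = -(2/3)*mu*q2 c d mu mu) by lra. cbv beta. rewrite E.
           assert (0 < mu^2) by (apply pow2_gt_0; exact Hmu).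
           assert (0 < (q2 c d mu mu)^2) by (apply pow2_gt_0; exact Hq2).
           assert (0 < mu^2 * (q2 c d mu mu)^2) by (apply Rmult_lt_0_compat; assumption).
           set (Q := q2 c d mu mu) in *. nra.
    + apply (odd_case c d b mu (fun y => 2*y*q1 c d b mu y) 1).
      * unfold q1; reg.
      * intro H. apply Rmult_integral in H. destruct H as [H|H]; [|contradiction].
        apply Rmult_integral in H. destruct H; lra.
      * intros y. rewrite (q_q1 c d b mu y), Hq. ring.
      * ring.
Qed.

Lemma nonzero_excl c d b mu : 2*mu*q_beta c d b mu <> 0 ->
  exists del, 0 < del /\ forall x y, x <> 0 -> Rabs x < del -> Rabs (y - mu) < del -> Hf c d b (x^2) y <> 0.
Proof.
  intros Hn. destruct (sign_choice _ Hn) as [sg [Hsg Hp]].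
  destruct (L2 (fun y => sg*(2*y*q_beta c d b y)) (fun y => sg * H1f c d b y) (fun y => sg*(2*y)) mu)
    as [del [Hdel H]]; try (unfold q_beta, H1f, A0; reg); try exact Hp.
  exists (Rmin del 1). split; [apply Rmin_pos; lra|]. intros x y Hx Hax Hy HH.
  pose proof (Rmin_l del 1). pose proof (Rmin_r del 1).
  assert (Hx2 : Rabs (x^2) < del).
  { rewrite <- RPow_abs. pose proof (Rabs_pos x). nra. }
  specialize (H (x^2) y Hx2 ltac:(lra)). rewrite Hf_split in HH.
  replace (sg * (2 * y * q_beta c d b y) + x ^ 2 * (sg * H1f c d b y) + (x ^ 2) ^ 2 * (sg * (2 * y)))
    with (sg * (2 * y * q_beta c d b y + x ^ 2 * H1f c d b y + (x ^ 2) ^ 2 * (2 * y))) in H by ring.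
  rewrite HH in H. lra.
Qed.

Lemma zero_excl d b : 0 < d -> 0 < b ->
  exists del, 0 < del /\ forall x y, x <> 0 -> Rabs x < del -> Rabs (y - 0) < del -> Hf 0 d b (x^2) y <> 0.
Proof.
  intros Hd Hb.
  destruct (cont_pos (fun y => y^3 + 2*d*y^2 + d^2*y + d*b/2) 0) as [d1 [Hd1 P1]]; [reg| nra |].
  destruct (L2 (fun y => H1f 0 d b y) (fun y => 2*y) (fun _ => 0) 0) as [d2 [Hd2 P2]];
    [unfold H1f, A0; reg| reg | reg | unfold H1f, A0; nra |].
  exists (Rmin (Rmin d1 d2) 1). split; [repeat apply Rmin_pos; lra|].
  intros x y Hx Hax Hy HH.
  pose proof (Rmin_l (Rmin d1 d2) 1). pose proof (Rmin_r (Rmin d1 d2) 1).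
  pose proof (Rmin_l d1 d2). pose proof (Rmin_r d1 d2).
  assert (Hx2 : Rabs (x^2) < d2).
  { rewrite <- RPow_abs. pose proof (Rabs_pos x). nra. }
  specialize (P1 y ltac:(lra)). specialize (P2 (x^2) y Hx2 ltac:(lra)).
  rewrite Hf_split in HH.
  assert (E : 2 * y * q_beta 0 d b y = 2*y^2 * (y^3 + 2*d*y^2 + d^2*y + d*b/2)) by (unfold q_beta; field).
  rewrite E in HH.
  assert (0 < x^2) by (apply pow2_gt_0; exact Hx).
  assert (0 <= 2*y^2 * (y^3 + 2*d*y^2 + d^2*y + d*b/2)) by (pose proof (pow2_ge_0 y); nra).
  assert (0 < x^2 * (H1f 0 d b y + x ^ 2 * (2 * y) + (x ^ 2) ^ 2 * 0)) by (apply Rmult_lt_0_compat; lra).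
  assert (2 * y ^ 2 * (y ^ 3 + 2 * d * y ^ 2 + d ^ 2 * y + d * b / 2) + x ^ 2 * H1f 0 d b y + (x ^ 2) ^ 2 * (2 * y)
     = 2 * y ^ 2 * (y ^ 3 + 2 * d * y ^ 2 + d ^ 2 * y + d * b / 2) + x^2 * (H1f 0 d b y + x ^ 2 * (2 * y) + (x ^ 2) ^ 2 * 0)) by ring.
  lra.
Qed.

Theorem proposition3p2 (c d beta : R) (hc : 0 <= c) (hd : 0 < d) (hb : 0 < beta) :
  (0 < c -> forall mu : R,
     in_sphere_closure (W_minus_iR c d beta) (Some (0, mu))
     <-> (mu = 0 \/ q_beta c d beta mu = 0)) /\
  (c = 0 -> forall mu : R,
     in_sphere_closure (W_minus_iR c d beta) (Some (0, mu))
     <-> (mu <> 0 /\ q_beta c d beta mu = 0)).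
Proof.
  assert (Nec : forall mu, in_sphere_closure (W_minus_iR c d beta) (Some (0, mu)) -> mu = 0 \/ q_beta c d beta mu = 0).
  { intros mu Hcl. destruct (Req_dec (2*mu*q_beta c d beta mu) 0) as [H|H].
    - apply Rmult_integral in H. destruct H as [H|H]; [left; lra | right; exact H].
    - exfalso. exact (nec_gen c d beta mu (nonzero_excl c d beta mu H) Hcl). }
  split.
  - intros Hc mu. split; [apply Nec|].
    intros Hm. apply suff_gen. apply suff_core; try assumption.
    destruct (Req_dec mu 0) as [->|Hmu]; [left; split; [reflexivity|exact Hc]|].
    right. split; [exact Hmu|]. destruct Hm; [contradiction|assumption].
  - intros Hc0 mu. split.
    + intros Hcl. destruct (Req_dec mu 0) as [->|Hmu].
      * exfalso. subst c. exact (nec_gen 0 d beta 0 (zero_excl d beta hd hb) Hcl).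
      * split; [exact Hmu|]. destruct (Nec mu Hcl); [contradiction|assumption].
    + intros [Hmu Hq]. apply suff_gen. apply suff_core; try assumption. right. split; assumption.
Qed.
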